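(* Fix real numbers $\alpha>0$, $\gamma>0$, $\xi>0$, $\sigma>0$. For $(h,k,p,q)\in\mathbb{R}\times(0,2)\times\mathbb{R}\times\mathbb{R}$ define \[ \sigma_B^2=\frac{h^2}{1-(1-k)^2}\,\sigma^2,\qquad \sigma_F^2=\frac{1}{\alpha^2}\Big[(1-h-p)^2+\frac{h^2(k-q)^2}{1-(1-k)^2}\Big]\sigma^2,\qquad \sigma_W^2=\Big[p^2+\frac{h^2q^2}{1-(1-k)^2}\Big]\sigma^2, \] and $\mathcal{L}(h,k,p,q)=\sigma_W^2+\xi\,\sigma_B^2+\gamma\,\sigma_F^2$. Let \[ \beta=\frac{\gamma}{\xi(\gamma+\alpha^2)}. \] Then $\mathcal{L}$ attains its minimum over $\mathbb{R}\times(0,2)\times\mathbb{R}\times\mathbb{R}$ uniquely at \[ p=q=\xi\,\frac{\sqrt{4\beta+1}-1}{2},\qquad h=\frac{2\beta+1-\sqrt{4\beta+1}}{2\beta},\qquad k=\frac{\sqrt{4\beta+1}-1}{2\beta}. \]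
   Context: Interpretation (not needed for the claim): in a transitive network, after diagonalizing the graph Laplacian, each nonzero singular value $\alpha=\alpha(\theta)$ of the incidence operator gives a scalar mode with i.i.d. zero-mean noise $z(t)$ of variance $\sigma^2$ and linear control $b(t)=(1-k)b(t-1)+h z(t)$ (storage deviation), $f(t)=-\alpha^{-1}\{(1-h-p)z(t)+(k-q)b(t-1)\}$ (flow), $w(t)=p z(t)+q b(t-1)$ (fast generation); $\sigma_B^2,\sigma_F^2,\sigma_W^2$ are the stationary variances of $b,f,w$, and $\gamma,\xi$ are Lagrange weights penalizing flow and storage variance. *)

(* Defs.v *)
From Stdlib Require Import Reals Lra Psatz.
Open Scope R_scope.

Definition sigB2 (sigma h k : R) : R :=
  h ^ 2 / (1 - (1 - k) ^ 2) * sigma ^ 2.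

Definition sigF2 (alpha sigma h k p q : R) : R :=
  / alpha ^ 2 * ((1 - h - p) ^ 2 + h ^ 2 * (k - q) ^ 2 / (1 - (1 - k) ^ 2)) * sigma ^ 2.

Definition sigW2 (sigma h k p q : R) : R :=
  (p ^ 2 + h ^ 2 * q ^ 2 / (1 - (1 - k) ^ 2)) * sigma ^ 2.

Definition Lag (alpha gamma xi sigma h k p q : R) : R :=
  sigW2 sigma h k p q + xi * sigB2 sigma h k + gamma * sigF2 alpha sigma h k p q.

Definition beta (alpha gamma xi : R) : R := gamma / (xi * (gamma + alpha ^ 2)).

Definition p_opt (alpha gamma xi : R) : R :=
  xi * ((sqrt (4 * beta alpha gamma xi + 1) - 1) / 2).
Definition h_opt (alpha gamma xi : R) : R :=
  (2 * beta alpha gamma xi + 1 - sqrt (4 * beta alpha gamma xi + 1))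
  / (2 * beta alpha gamma xi).
Definition k_opt (alpha gamma xi : R) : R :=
  (sqrt (4 * beta alpha gamma xi + 1) - 1) / (2 * beta alpha gamma xi).

(* Main.v *)
Require Import Defs.
From Stdlib Require Import Reals Lra Psatz.
Open Scope R_scope.

Lemma ident alpha t s sigma h k p q : 0<alpha -> 0<t<1 -> 1<s -> 0<k<2 ->
 Lag alpha (alpha^2*t/(1-t)) (4*t/(s^2-1)) sigma h k p q =
 sigma^2 * ((4*t/(s^2-1))*(1+s)/2*t/((4*t/(s^2-1))*(1+s)/2+t)
   + /(1-t) * h^2*(q - t*k)^2/(1-(1-k)^2) + /(1-t)*(p - t*(1-h))^2
   + h^2*(t+(4*t/(s^2-1))*(1+s)/2)*(k - 2/(s+1))^2/(1-(1-k)^2)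
   + ((4*t/(s^2-1))*(1+s)/2+t)*(h-(s-1)/(s+1))^2).
Proof.
intros Ha Ht Hs Hk. unfold Lag, sigW2, sigB2, sigF2.
assert (s^2-1 <> 0) by nra.
assert (1-(1-k)^2 <> 0) by nra.
assert ((4*t/(s^2-1))*(1+s)/2+t <> 0).
{ assert (0 < 4*t/(s^2-1)) by (apply Rdiv_lt_0_compat; nra). nra. }
field. repeat split; try lra; nra.
Qed.

Lemma sq0 x : x^2 = 0 -> x = 0.
Proof. intro H. nra. Qed.

Theorem mainTheorem1 (alpha gamma xi sigma : R)
  (Halpha : 0 < alpha) (Hgamma : 0 < gamma) (Hxi : 0 < xi) (Hsigma : 0 < sigma) :
  (0 < k_opt alpha gamma xi < 2) /\
  (forall h k p q : R, 0 < k < 2 ->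
     (h, k, p, q) <> (h_opt alpha gamma xi, k_opt alpha gamma xi,
                      p_opt alpha gamma xi, p_opt alpha gamma xi) ->
     Lag alpha gamma xi sigma (h_opt alpha gamma xi) (k_opt alpha gamma xi)
         (p_opt alpha gamma xi) (p_opt alpha gamma xi)
     < Lag alpha gamma xi sigma h k p q).
Proof.
assert (Ha2 : 0 < alpha^2) by nra.
assert (Hb : 0 < beta alpha gamma xi).
{ unfold beta. apply Rdiv_lt_0_compat; nra. }
assert (Hex : exists t s, 0 < t < 1 /\ 1 < s /\ xi = 4*t/(s^2-1) /\
          gamma = alpha^2*t/(1-t) /\ sqrt (4 * beta alpha gamma xi + 1) = s).
{ exists (gamma/(gamma+alpha^2)), (sqrt (4 * beta alpha gamma xi + 1)).
  assert (Hs2 : sqrt (4 * beta alpha gamma xi + 1) ^ 2 = 4 * beta alpha gamma xi + 1).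
  { rewrite pow2_sqrt; lra. }
  assert (Hs1 : 1 < sqrt (4 * beta alpha gamma xi + 1)).
  { pattern 1 at 1; rewrite <- sqrt_1. apply sqrt_lt_1; lra. }
  refine (conj (conj _ _) (conj Hs1 (conj _ (conj _ eq_refl)))).
  - apply Rdiv_lt_0_compat; lra.
  - apply (Rmult_lt_reg_r (gamma+alpha^2)); [lra|].
    unfold Rdiv; rewrite Rmult_assoc, Rinv_l; lra.
  - rewrite Hs2. unfold beta. field. split; lra.
  - replace (1 - gamma/(gamma+alpha^2)) with (alpha^2/(gamma+alpha^2)) by (field; lra).
    field. split; lra. }
destruct Hex as [t [s [Ht [Hs [Hxe [Hge Hse]]]]]].
assert (Hb' : beta alpha gamma xi = (s^2-1)/4).
{ rewrite Hxe, Hge. unfold beta. field.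
  assert (s^2-1<>0) by nra. repeat split; try lra; nra. }
assert (Hk : k_opt alpha gamma xi = 2/(s+1)).
{ unfold k_opt. rewrite Hse, Hb'. field. split; nra. }
assert (Hh : h_opt alpha gamma xi = (s-1)/(s+1)).
{ unfold h_opt. rewrite Hse, Hb'. field. split; nra. }
assert (Hp : p_opt alpha gamma xi = t*(2/(s+1))).
{ unfold p_opt. rewrite Hse, Hxe. field. split; nra. }
rewrite Hk, Hh, Hp.
clear Hb' Hse Hk Hh Hp Hb.
subst xi gamma.
split.
{ split.
  - apply Rdiv_lt_0_compat; lra.
  - apply (Rmult_lt_reg_r (s+1)); [lra|].
    unfold Rdiv; rewrite Rmult_assoc, Rinv_l; lra. }
intros h k p q Hk Hne.
assert (Hk2 : 0 < 2/(s+1) < 2).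
{ split. - apply Rdiv_lt_0_compat; lra.
  - apply (Rmult_lt_reg_r (s+1)); [lra|].
    unfold Rdiv; rewrite Rmult_assoc, Rinv_l; lra. }
rewrite !ident by lra.
set (g := 4 * t / (s ^ 2 - 1) * (1 + s) / 2).
assert (Hg : 0 < g).
{ unfold g. assert (0 < 4*t/(s^2-1)) by (apply Rdiv_lt_0_compat; nra). nra. }
assert (HD : 0 < 1-(1-k)^2) by nra.
assert (HD' : 0 < 1-(1-2/(s+1))^2) by nra.
assert (Hit : 0 < /(1-t)) by (apply Rinv_0_lt_compat; lra).
assert (E1 : 1 - (s-1)/(s+1) = 2/(s+1)) by (field; lra).
match goal with |- ?L < sigma^2*?R => replace L with (sigma^2*(g*t/(g+t))) by (field; repeat split; lra) end.
apply Rmult_lt_compat_l; [nra|].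
set (A := /(1-t) * h^2*(q - t*k)^2/(1-(1-k)^2)).
set (B := /(1-t)*(p - t*(1-h))^2).
set (C := h^2*(t+g)*(k - 2/(s+1))^2/(1-(1-k)^2)).
set (E := (g+t)*(h-(s-1)/(s+1))^2).
assert (HA : 0 <= A).
{ unfold A. unfold Rdiv. apply Rmult_le_pos; [|left; apply Rinv_0_lt_compat; lra].
  apply Rmult_le_pos; [apply Rmult_le_pos; [lra|apply pow2_ge_0]|apply pow2_ge_0]. }
assert (HB : 0 <= B) by (unfold B; apply Rmult_le_pos; [lra|apply pow2_ge_0]).
assert (HC : 0 <= C).
{ unfold C. unfold Rdiv. apply Rmult_le_pos; [|left; apply Rinv_0_lt_compat; lra].
  apply Rmult_le_pos; [apply Rmult_le_pos; [apply pow2_ge_0|lra]|apply pow2_ge_0]. }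
assert (HE : 0 <= E) by (unfold E; apply Rmult_le_pos; [lra|apply pow2_ge_0]).
destruct (Req_dec E 0) as [E0|E0]; [|lra].
assert (hE : h = (s-1)/(s+1)).
{ unfold E in E0. apply Rmult_integral in E0. destruct E0 as [E0|E0]; [lra|].
  apply sq0 in E0. lra. }
assert (Hh0 : 0 < h) by (rewrite hE; apply Rdiv_lt_0_compat; lra).
destruct (Req_dec C 0) as [C0|C0]; [|lra].
assert (kE : k = 2/(s+1)).
{ unfold C, Rdiv in C0. apply Rmult_integral in C0. destruct C0 as [C0|C0];
  [|apply Rinv_neq_0_compat in C0; lra; exact C0].
  apply Rmult_integral in C0. destruct C0 as [C0|C0].
  - apply Rmult_integral in C0. destruct C0 as [C0|C0]; nra.
  - apply sq0 in C0. lra. }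
destruct (Req_dec B 0) as [B0|B0]; [|lra].
assert (pE : p = t*(2/(s+1))).
{ unfold B in B0. apply Rmult_integral in B0. destruct B0 as [B0|B0]; [lra|].
  apply sq0 in B0. rewrite hE, E1 in B0. lra. }
destruct (Req_dec A 0) as [A0|A0]; [|lra].
exfalso. apply Hne.
assert (qE : q = t*(2/(s+1))).
{ unfold A, Rdiv in A0. apply Rmult_integral in A0. destruct A0 as [A0|A0];
  [|apply Rinv_neq_0_compat in A0; lra; exact A0].
  apply Rmult_integral in A0. destruct A0 as [A0|A0].
  - apply Rmult_integral in A0. destruct A0 as [A0|A0]; nra.
  - apply sq0 in A0. rewrite kE in A0. lra. }
rewrite hE, kE, pE, qE. reflexivity.
Qed.
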